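(* Let $P$ be a finite graded bowtie-free poset of rank $n$ with $\hat0,\hat1$ and a good $\mathcal{H}_n(0)$ action $U_1,\dots,U_{n-1}$, let $\mathfrak m_0$ be the unique maximal chain with empty descent set, and let $\mathfrak m$ be any maximal chain. If $U_{i_1}\cdots U_{i_r}(\mathfrak m)=\mathfrak m_0$ and $U_{j_1}\cdots U_{j_s}(\mathfrak m)=\mathfrak m_0$ are both restless, then $s_{i_1}s_{i_2}\cdots s_{i_r}=s_{j_1}s_{j_2}\cdots s_{j_s}$ as permutations of $[n]$.
   Context: $s_i$ is the adjacent transposition $(i\ i+1)$ of $[n]$. Bowtie-free: no distinct $a,b,c,d$ with $a$ and $b$ each covering both $c$ and $d$. A good $\mathcal{H}_n(0)$ action is a family $U_1,\dots,U_{n-1}$ of maps on the set $\mathcal{M}(P)$ of maximal chains with: $U_i(\mathfrak m)$ agrees with $\mathfrak m$ except possibly at rank $i$; $U_i^2=U_i$; $U_iU_j=U_jU_i$ for $|i-j|\ge2$; $U_iU_{i+1}U_i=U_{i+1}U_iU_{i+1}$; and $\omega F_P=\mathrm{ch}(\chi_P)$ ($\chi_P$ the character of the $\mathcal{H}_n(0)$-module $\mathbb{C}\mathcal{M}(P)$ with $T_i=-U_i$, $F_P$ Ehrenborg's flag quasisymmetric function $\sum x_1^{\mathrm{rk}(t_0,t_1)}\cdots x_k^{\mathrm{rk}(t_{k-1},t_k)}$ over multichains $\hat0=t_0\le\cdots\le t_{k-1}<t_k=\hat1$, $\omega(L_{S,n})=L_{[n-1]\setminus S,n}$ on Gessel's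 fundamental quasisymmetric functions, $\mathrm{ch}(\chi_S)=L_{S,n}$ for the one-dimensional characters $\chi_S$: $T_i\mapsto-1$ for $i\in S$, $0$ otherwise). The descent set of $\mathfrak m$ is $\{i:U_i(\mathfrak m)\ne\mathfrak m\}$; such a $P$ has exactly one maximal chain $\mathfrak m_0$ with empty descent set. An expression $U_{i_1}\cdots U_{i_r}(\mathfrak m)=\mathfrak m'$ is restless if $U_{i_r}(\mathfrak m)\ne\mathfrak m$ (when $r\ge1$) and $U_{i_j}\cdots U_{i_r}(\mathfrak m)\ne U_{i_{j+1}}\cdots U_{i_r}(\mathfrak m)$ for $j=1,\dots,r-1$. *)

(* Defs.v *)
From HB Require Import structures.
From mathcomp Require Import all_boot all_order all_fingroup all_algebra.
Set Implicit Arguments. Unset Strict Implicit. Unset Printing Implicit Defensive.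
Import Order.TTheory GRing.Theory.

(* A finite poset with 0^ (= \bot) and 1^ (= \top) is a finTBPOrderType. *)

Section Poset.
Context {disp : Order.disp_t} (P : finTBPOrderType disp).

(* covers x y  <->  y covers x  (x <. y) *)
Definition covers (x y : P) : bool :=
  ((x < y)%O && [forall z : P, ~~ ((x < z)%O && (z < y)%O)]).

Definition graded_rank (n : nat) : Prop :=
  forall c : seq P, path covers \bot%O c -> last \bot%O c = \top%O -> size c = n.

Definition bowtie_free : Prop :=
  ~ exists a b c e : P,
      uniq [:: a; b; c; e] /\ covers c a /\ covers e a /\ covers c b /\ covers e b.

(* maximal chains of a graded poset of rank n: m_0 = \bot <. m_1 <. ... <. m_n = \top;
   m_k is the element of rank k of the chain *)
Definition is_maxchain (n : nat) (m : n.+1.-tuple P) : bool :=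
  [&& sorted covers m, head \bot%O m == \bot%O & last \bot%O m == \top%O].

Definition mchain (n : nat) := {m : n.+1.-tuple P | is_maxchain m}.

Definition rk_is (s t : P) (r : nat) : bool :=
  [exists c : r.-tuple P, path covers s c && (last s c == t)].

(* Monomials x^e = prod_k x_(k+1)^(e_k), encoded by e : seq nat.
   Number of multichains \bot = t_0 <= ... <= t_(k-1) < t_k = \top with
   x_1^rk(t_0,t_1) ... x_k^rk(t_(k-1),t_k) = x^e. *)
Definition multichain_count (k : nat) (e : seq nat) : nat :=
  #|[set t : k.+1.-tuple P |
     [&& nth \bot%O t 0 == \bot%O, last \bot%O t == \top%O, sorted <=%O t,
         (nth \bot%O t k.-1 < nth \bot%O t k)%O,
         [forall j : 'I_k, rk_is (nth \bot%O t j) (nth \bot%O t j.+1) (nth 0%N e j)] &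
         all (eq_op 0%N) (drop k e)]]|.

(* coefficient of x^e in Ehrenborg's flag quasisymmetric function F_P
   (multichains with k > size e cannot contribute since rk(t_(k-1),t_k) >= 1) *)
Definition Fcoef (e : seq nat) : nat :=
  \sum_(1 <= k < (size e).+1) multichain_count k e.

End Poset.

(* coefficient of x^e in Gessel's fundamental quasisymmetric function L_{S,n};
   S subset of [n-1] encoded by {set 'I_n.-1} (j : 'I_n.-1 stands for j+1).
   A sequence i_1 <= ... <= i_n of positive integers is encoded 0-based. *)
Definition Lcoef (n : nat) (S : {set 'I_n.-1}) (e : seq nat) : nat :=
  #|[set i : n.-tuple 'I_(size e) |
     [&& sorted leq (map val i),
         [forall j : 'I_n.-1, (j \in S) ==>
             (nth 0%N (map val i) j < nth 0%N (map val i) j.+1)%N] &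
         [forall x : 'I_(size e), count_mem x i == nth 0%N e x]]]|.

Fixpoint actw (T : Type) (U : nat -> T -> T) (w : seq nat) (m : T) : T :=
  match w with [::] => m | i :: w' => U i (actw U w' m) end.

Fixpoint restless (T : eqType) (U : nat -> T -> T) (w : seq nat) (m : T) : bool :=
  match w with
  | [::] => true
  | i :: w' => restless U w' m && (U i (actw U w' m) != actw U w' m)
  end.

Section Action.
Context {disp : Order.disp_t} (P : finTBPOrderType disp) (n : nat).

(* chi_P(T_{i_1} ... T_{i_k}) for T_i = - U_i acting on C M(P): the trace of
   (-1)^k U_{i_1}...U_{i_k}, i.e. (-1)^k times its number of fixed maximal chains *)
Definition chiP (U : nat -> mchain P n -> mchain P n) (w : seq nat) : int :=
  ((-1) ^+ size w * (#|[set m : mchain P n | actw U w m == m]|)%:Z)%R.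

Definition inS (S : {set 'I_n.-1}) (i : nat) : bool := [exists k in S, k.+1 == i].

Definition chiS (S : {set 'I_n.-1}) (w : seq nat) : int :=
  (\prod_(i <- w) (if inS S i then -1 else 0))%R.

Definition good_action (U : nat -> mchain P n -> mchain P n) : Prop :=
  [/\ (forall i, (0 < i < n)%N -> forall (m : mchain P n) (k : 'I_n.+1),
          val k != i -> tnth (val (U i m)) k = tnth (val m) k),
      (forall i, (0 < i < n)%N -> forall m, U i (U i m) = U i m),
      (forall i j, (0 < i < n)%N -> (0 < j < n)%N -> (i.+1 < j \/ j.+1 < i)%N ->
          forall m, U i (U j m) = U j (U i m)),
      (forall i, (0 < i)%N -> (i.+1 < n)%N ->
          forall m, U i (U i.+1 (U i m)) = U i.+1 (U i (U i.+1 m))) &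
      (* omega F_P = ch(chi_P): chi_P = sum_S c_S chi_S (as functionals on H_n(0),
         i.e. on all words in the T_i), so ch(chi_P) = sum_S c_S L_{S,n};
         F_P = sum_S d_S L_{S,n}, so omega F_P = sum_S d_S L_{[n-1]\S,n} *)
      exists c dd : {set 'I_n.-1} -> int,
        [/\ forall w, all (fun i => 0 < i < n)%N w ->
              chiP U w = (\sum_S c S * chiS S w)%R,
            forall e, ((Fcoef P e)%:Z = \sum_S dd S * (Lcoef S e)%:Z)%R &
            forall e, (\sum_S dd S * (Lcoef (~: S) e)%:Z =
                       \sum_S c S * (Lcoef S e)%:Z)%R]].

End Action.

(* the adjacent transposition s_i = (i i+1) of [n] = {1,...,n}, realized on 'I_n
   (0-based: exchanges i-1 and i); identity if out of range *)
Definition adjT (n i : nat) : 'S_n :=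
  match (insub i.-1 : option 'I_n), (insub i : option 'I_n) with
  | Some a, Some b => tperm a b
  | _, _ => 1%g
  end.

(* Main.v *)
Require Import Defs.
From HB Require Import structures.
From mathcomp Require Import all_boot all_order all_fingroup all_algebra.
From mathcomp Require Import zify.
Set Implicit Arguments. Unset Strict Implicit.
Import Order.TTheory.

Lemma adjT_ex n i : (0 < i < n)%N ->
  exists a b : 'I_n, [/\ val a = i.-1, val b = i & adjT n i = tperm a b].
Proof.
case/andP=> i0 iN; rewrite /adjT.
have h1 : (i.-1 < n)%N by rewrite (leq_ltn_trans (leq_pred i)).
rewrite insubT /= insubT /=.
by exists (Ordinal h1), (Ordinal iN).
Qed.

Lemma adjT_comm n i j : (0 < i < n)%N -> (0 < j < n)%N -> (i.+1 < j \/ j.+1 < i)%N ->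
  (adjT n i * adjT n j = adjT n j * adjT n i)%g.
Proof.
move=> hi hj hij.
have [a [b [ea eb ->]]] := adjT_ex hi.
have [c [d [ec ed ->]]] := adjT_ex hj.
have ne : forall x y : 'I_n, val x != val y -> x != y.
  by move=> x y; apply: contra => /eqP ->.
case/andP: hi => i0 _; case/andP: hj => j0 _.
have e : (tperm c d ^ tperm a b = tperm c d)%g.
  rewrite tpermJ !tpermD //; apply: ne; rewrite ?ea ?eb ?ec ?ed;
  case: hij => h; apply/eqP => e; move: h; rewrite ?e;
  (destruct i; destruct j; simpl in *; try done); lia.
by rewrite [in RHS]conjgC e.
Qed.

Lemma adjT_braid n i : (0 < i)%N -> (i.+1 < n)%N ->
  (adjT n i * adjT n i.+1 * adjT n i = adjT n i.+1 * adjT n i * adjT n i.+1)%g.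
Proof.
move=> i0 iN.
have hi : (0 < i < n)%N by rewrite i0 (ltn_trans (ltnSn i) iN).
have hj : (0 < i.+1 < n)%N by rewrite iN.
have [a [b [ea eb ->]]] := adjT_ex hi.
have [c [d [ec ed ->]]] := adjT_ex hj.
have bc : b = c by apply: val_inj; rewrite eb ec.
subst c.
have ne : forall x y : 'I_n, val x != val y -> x != y.
  by move=> x y; apply: contra => /eqP ->.
have ad : a != d by apply: ne; rewrite ea ed; destruct i => //=; lia.
have bd : b != d by apply: ne; rewrite eb ed; lia.
have ab : a != b by apply: ne; rewrite ea eb; destruct i => //=; lia.
have -> : (tperm a b * tperm b d * tperm a b = tperm b d ^ tperm a b)%g.
  by rewrite conjgE tpermV mulgA.
have -> : (tperm b d * tperm a b * tperm b d = tperm a b ^ tperm b d)%g.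
  by rewrite conjgE tpermV mulgA.
rewrite !tpermJ tpermR tpermL tpermD // tpermD //.
all: try by rewrite eq_sym.
Qed.
Definition ent disp (P : finTBPOrderType disp) n (x : mchain P n) (r : nat) : P :=
  nth \bot%O (val x) r.

Lemma chain_eq disp (P : finTBPOrderType disp) n (x y : mchain P n) :
  (forall r, (r <= n)%N -> ent x r = ent y r) -> x = y.
Proof.
move=> h; apply: val_inj; apply: eq_from_tnth => k.
by rewrite !(tnth_nth \bot%O); apply: h; exact: (ltn_ord k).
Qed.

Lemma loc_ent disp (P : finTBPOrderType disp) n (U : nat -> mchain P n -> mchain P n) :
  good_action U -> forall i m r, (0 < i < n)%N -> (r <= n)%N -> r != i ->
  ent (U i m) r = ent m r.
Proof.
case=> Hloc _ _ _ _ i m r hi hr ne.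
have := Hloc i hi m (Ordinal (hr : (r < n.+1)%N)) ne.
by rewrite !(tnth_nth \bot%O).
Qed.

Lemma diff_ent disp (P : finTBPOrderType disp) n (U : nat -> mchain P n -> mchain P n) :
  good_action U -> forall i x, (0 < i < n)%N -> U i x != x -> ent (U i x) i != ent x i.
Proof.
move=> G i x hi; apply: contra => /eqP e; apply/eqP; apply: chain_eq => r hr.
case: (eqVneq r i) => [->|ne]; first exact: e.
exact: loc_ent.
Qed.

Lemma cov_ent disp (P : finTBPOrderType disp) n (x : mchain P n) r :
  (r < n)%N -> covers (ent x r) (ent x r.+1).
Proof.
move=> hr; case: x => t /= H; case/and3P: (H) => s _ _.
rewrite /ent /=; apply: (sortedP \bot%O s).
by rewrite size_tuple.
Qed.

Lemma cov_neq disp (P : finTBPOrderType disp) (x y : P) : covers x y -> x != y.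
Proof. by case/andP => /lt_eqF ->. Qed.

Lemma BL disp (P : finTBPOrderType disp) n (c1 c2 c3 c4 : mchain P n) r :
  bowtie_free P -> (r < n)%N ->
  ent c1 r = ent c3 r -> ent c2 r = ent c4 r ->
  ent c1 r.+1 = ent c2 r.+1 -> ent c3 r.+1 = ent c4 r.+1 ->
  ent c1 r != ent c2 r -> ent c1 r.+1 != ent c3 r.+1 -> False.
Proof.
move=> B hr e13 e24 e12 e34 np nq; apply: B.
have k1 := cov_ent c1 hr; have k2 := cov_ent c2 hr.
have k3 := cov_ent c3 hr; have k4 := cov_ent c4 hr.
rewrite -e12 in k2; rewrite -e13 in k3; rewrite -e24 -e34 in k4.
exists (ent c1 r.+1), (ent c3 r.+1), (ent c1 r), (ent c2 r).
split=> //=.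
rewrite !inE !negb_or nq /= np !andbT.
have := cov_neq k1; have := cov_neq k2; have := cov_neq k3; have := cov_neq k4.
by rewrite ![_ == ent c1 r.+1]eq_sym ![_ == ent c3 r.+1]eq_sym => -> -> -> ->.
Qed.

Lemma BL2 disp (P : finTBPOrderType disp) n (x1 x2 x3 x4 : mchain P n) i j :
  bowtie_free P -> (i < n)%N -> (j < n)%N -> (i.+1 = j \/ j.+1 = i) ->
  ent x1 i = ent x3 i -> ent x2 i = ent x4 i ->
  ent x1 j = ent x2 j -> ent x3 j = ent x4 j ->
  ent x1 i != ent x2 i -> ent x1 j != ent x3 j -> False.
Proof.
move=> B hi hj [<-|<-] a b c d e f.
  exact: (BL B hi a b c d e f).
exact: (BL (c1:=x1) (c2:=x3) (c3:=x2) (c4:=x4) B hj c d a b f e).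
Qed.

Inductive RP disp (P : finTBPOrderType disp) n (U : nat -> mchain P n -> mchain P n) :
  mchain P n -> seq nat -> mchain P n -> Prop :=
| RP0 m : RP U m [::] m
| RPc m i l m' : (0 < i < n)%N -> U i m != m -> RP U (U i m) l m' -> RP U m (i :: l) m'.

Lemma RP_nil disp (P : finTBPOrderType disp) n (U : nat -> mchain P n -> mchain P n) m m' :
  RP U m [::] m' -> m = m'.
Proof. by move=> h; inversion h. Qed.

Lemma RP_cons disp (P : finTBPOrderType disp) n (U : nat -> mchain P n -> mchain P n) m i l m' :
  RP U m (i :: l) m' -> [/\ (0 < i < n)%N, U i m != m & RP U (U i m) l m'].
Proof. by move=> h; inversion h. Qed.

Lemma RP_rcons disp (P : finTBPOrderType disp) n (U : nat -> mchain P n -> mchain P n) m l x i :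
  RP U m l x -> (0 < i < n)%N -> U i x != x -> RP U m (rcons l i) (U i x).
Proof.
elim=> [y|y j l' y' hj ne _ IH] hi hx /=.
  by apply: RPc => //; apply: RP0.
by apply: RPc => //; apply: IH.
Qed.

Definition Q n (l : seq nat) : {perm 'I_n} := (\prod_(i <- rev l) adjT n i)%g.

Lemma Q_cons n i l : Q n (i :: l) = (Q n l * adjT n i)%g.
Proof. by rewrite /Q rev_cons big_rcons. Qed.

Lemma exch disp (P : finTBPOrderType disp) n (U : nat -> mchain P n -> mchain P n) :
  bowtie_free P -> good_action U -> forall m0 : mchain P n,
  (forall i, (0 < i < n)%N -> U i m0 = m0) ->
  forall k l a, (size l <= k)%N -> RP U a l m0 ->
  forall j, (0 < j < n)%N -> U j a != a ->
  exists l', [/\ RP U (U j a) l' m0, (size l').+1 = size l & Q n l = (Q n l' * adjT n j)%g].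
Proof.
move=> B G m0 H0.
have G' := G; case: G' => _ Hid Hcom Hbr _.
have dif := diff_ent G.
have L : forall x r s, (0 < r < n)%N -> (0 < s < n)%N -> r != s -> ent (U s x) r = ent x r.
  move=> x r s hr hs' ne'; apply: (loc_ent G) => //; case/andP: hr => _ /ltnW //.
elim=> [|k IH] l a hs R j hj ne.
  case: l hs R => // _ /RP_nil e; subst a.
  by rewrite H0 ?eqxx in ne.
case: l hs R => [|i l''] hs R.
  by move/RP_nil: R => e; subst a; rewrite H0 ?eqxx in ne.
case/RP_cons: R => hi hne R.
case: (eqVneq i j) => [e|nij].
  subst i; exists l''; split => //; exact: Q_cons.
have hin : (i < n)%N by case/andP: hi.
have hjn : (j < n)%N by case/andP: hj.
have [far|adj] : (i.+1 < j \/ j.+1 < i)%N \/ (i.+1 = j \/ j.+1 = i).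
  by move: nij => /eqP; lia.
-
  have c1 : U j (U i a) != U i a.
    apply/eqP => E.
    have E2 : U i (U j a) = U i a by rewrite Hcom // E.
    have := dif j a hj ne; rewrite -(L (U j a) j i) // 1?eq_sym //.
    by rewrite E2 L // ?eqxx // eq_sym.
  have c2 : U i (U j a) != U j a.
    apply/eqP => E.
    have E2 : U j (U i a) = U j a by rewrite -Hcom // E.
    have := dif i a hi hne; rewrite -(L (U i a) i j) //.
    by rewrite E2 L // ?eqxx.
  have [l3 [R3 s3 q3]] := IH l'' (U i a) (hs : (size l'' <= k)%N) R j hj c1.
  exists (i :: l3); split.
  + apply: RPc => //. by rewrite Hcom.
  + by rewrite /= s3.
  + rewrite !Q_cons q3 -!mulgA; congr (_ * _)%g.
    by rewrite adjT_comm //; case: far; [right|left].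
-
  have braid : forall x, U i (U j (U i x)) = U j (U i (U j x)).
    move=> x; case: (adj) => e; [subst j | subst i].
      by apply: Hbr; lia.
    by symmetry; apply: Hbr; lia.
  have BLa := fun x1 x2 x3 x4 => @BL2 _ _ _ x1 x2 x3 x4 i j B hin hjn adj.
  set a1 := U i a. set b := U j a.
  have nij' : j != i by rewrite eq_sym.
  have ai : ent a1 i != ent a i by apply: dif.
  have bj : ent b j != ent a j by apply: dif.
  have a1j : ent a1 j = ent a j by apply: L.
  have bi : ent b i = ent a i by apply: L.
  have c1 : U j a1 != a1.
    apply/eqP => E.
    have E2 : a1 = U j (U i b).
      by rewrite -braid -/a1 E Hid.
    apply: (BLa a a1 b (U i b)) => //.
    + by rewrite E2 L.
    + by rewrite L.
    + by rewrite eq_sym.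
    + by rewrite eq_sym.
  have [l3 [R3 s3 q3]] := IH l'' a1 (hs : (size l'' <= k)%N) R j hj c1.
  set a2 := U j a1.
  have a2i : ent a2 i = ent a1 i by apply: L.
  have a2j : ent a2 j != ent a1 j by apply: dif.
  have K : ent b j != ent a2 j.
    apply/eqP => E.
    apply: (BLa a a1 b a2) => //.
    all: try by rewrite eq_sym.
    all: try by rewrite a2i.
    all: try by rewrite -a1j.
  have c2 : U i a2 != a2.
    apply/eqP => E.
    have E2 : a2 = U j (U i b) by rewrite -E /a2 /a1 braid.
    apply: (BLa a a1 b (U i b)) => //.
    + by rewrite -a2i E2 L.
    + by rewrite L.
    + by rewrite eq_sym.
    + by rewrite eq_sym.
  have hs3 : (size l3 <= k)%N by move: hs; rewrite /= -s3; lia.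
  have [l4 [R4 s4 q4]] := IH l3 a2 hs3 R3 i hi c2.
  have a3E : U i a2 = U j (U i b) by rewrite /a2 /a1 braid.
  have c3 : U i b != b.
    apply/eqP => E; move/negP: K; apply; apply/eqP.
    have : ent (U i a2) j = ent a2 j by apply: L.
    by rewrite a3E E /b Hid.
  have c4 : U j (U i b) != U i b.
    apply/eqP => E; move/negP: K; apply; apply/eqP.
    have : ent (U i a2) j = ent a2 j by apply: L.
    rewrite a3E E => <-; by rewrite L.
  exists (i :: j :: l4); split.
  + apply: RPc => //; apply: RPc => //; by rewrite -a3E.
  + by rewrite /= s4 s3.
  + rewrite !Q_cons q3 q4 -!mulgA; congr (_ * _)%g.
    case: adj => e.
    * subst j; rewrite !mulgA adjT_braid //; by case/andP: hi.
    * subst i; rewrite !mulgA adjT_braid //; by case/andP: hj.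
Qed.

Lemma RP_uniq disp (P : finTBPOrderType disp) n (U : nat -> mchain P n -> mchain P n) :
  bowtie_free P -> good_action U -> forall m0 : mchain P n,
  (forall i, (0 < i < n)%N -> U i m0 = m0) ->
  forall l1 m l2, RP U m l1 m0 -> RP U m l2 m0 -> Q n l1 = Q n l2.
Proof.
move=> B G m0 H0; elim=> [|i l1 IH] m l2 R1 R2.
  move/RP_nil: R1 => e; subst m.
  case: l2 R2 => [//|j l2] /RP_cons [hj ne _].
  by rewrite H0 ?eqxx in ne.
case/RP_cons: R1 => hi ne R1.
have [l2' [R2' _ q2]] := exch B G H0 (leqnn (size l2)) R2 hi ne.
by rewrite Q_cons q2 (IH _ _ R1 R2').
Qed.

Lemma to_RP disp (P : finTBPOrderType disp) n (U : nat -> mchain P n -> mchain P n) :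
  forall w m, all (fun i => 0 < i < n)%N w -> restless U w m ->
  RP U m (rev w) (actw U w m).
Proof.
elim=> [|i w IH] m /=; first by move=> _ _; apply: RP0.
case/andP=> hi hw /andP [rw ne].
rewrite rev_cons; apply: RP_rcons => //; exact: IH.
Qed.

Theorem mainTheorem12 (disp : Order.disp_t) (P : finTBPOrderType disp) (n : nat)
  (U : nat -> mchain P n -> mchain P n) :
  graded_rank P n -> bowtie_free P -> good_action U ->
  forall m0 : mchain P n, (forall i, (0 < i < n)%N -> U i m0 = m0) ->
  forall (m : mchain P n) (w1 w2 : seq nat),
    all (fun i => 0 < i < n)%N w1 -> all (fun i => 0 < i < n)%N w2 ->
    actw U w1 m = m0 -> restless U w1 m ->
    actw U w2 m = m0 -> restless U w2 m ->
    (\prod_(i <- w1) adjT n i)%g = (\prod_(i <- w2) adjT n i)%g.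
Proof.
move=> _ B G m0 H0 m w1 w2 a1 a2 e1 r1 e2 r2.
have R1 := to_RP a1 r1; have R2 := to_RP a2 r2.
rewrite e1 in R1; rewrite e2 in R2.
have := RP_uniq B G H0 R1 R2.
by rewrite /Q !revK.
Qed.
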